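(* Let $\bar N_{\rm p}=2^r$ with $r\ge1$ and $N_{\rm p}=\bar N_{\rm p}^2$. Let $\boldsymbol B:=(\boldsymbol H_{\bar N_{\rm p}}\otimes\boldsymbol H_{\bar N_{\rm p}})^*\boldsymbol\Psi_{\rm idhw}\in\mathbb R^{N_{\rm p}\times N_{\rm p}}$. For each $l_{\rm p}=\bar N_{\rm p}(l_{\rm y}-1)+l_{\rm x}$ with $l_{\rm x},l_{\rm y}\in\{1,\dots,\bar N_{\rm p}\}$, define the local coherence $\mu_{l_{\rm p}}:=\max_j|B_{l_{\rm p},j}|$. Then $$\mu_{l_{\rm p}}=\kappa^{\rm p}_{l_{\rm p}}:=\min\{1,2^{-\lfloor\log_2(\max\{l_{\rm x},l_{\rm y}\}-1)\rfloor}\},$$ with the convention $\log_2 0=-\infty$, so that $\kappa^{\rm p}_{l_{\rm p}}=1$ when $l_{\rm x}=l_{\rm y}=1$. Moreover, $$\sum_{l_{\rm p}=1}^{N_{\rm p}}(\kappa^{\rm p}_{l_{\rm p}})^2=1+3\log_2(\bar N_{\rm p}).$$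
   Context: Let $\boldsymbol a=[1,1]^\top$ and $\boldsymbol b=[1,-1]^\top$. Paley-ordered Hadamard matrix: $\boldsymbol H_1=[1]$ and $\boldsymbol H_n=\tfrac1{\sqrt2}[\boldsymbol H_{n/2}\otimes\boldsymbol a,\ \boldsymbol H_{n/2}\otimes\boldsymbol b]$. Haar matrices: $\boldsymbol W_1=[1]$ and $\boldsymbol W_n=\tfrac1{\sqrt2}[\boldsymbol W_{n/2}\otimes\boldsymbol a,\ \boldsymbol I_{n/2}\otimes\boldsymbol b]$. Also $\boldsymbol W^0_1=[1]$ and $\boldsymbol W^0_n=\tfrac1{\sqrt2}[\boldsymbol W^0_{n/2}\otimes\boldsymbol a,\ \boldsymbol I_{n/2}\otimes\boldsymbol a]$. Dyadic levels: $\mathcal T_0=\{1\}$ and $\mathcal T_\ell=\{2^{\ell-1}+1,\dots,2^\ell\}$ for $\ell\ge1$. For an index set $S$, $\boldsymbol A\boldsymbol P_S^\top$ denotes the submatrix of columns of $\boldsymbol A$ indexed by $S$. 2-D isotropic Haar basis: $\boldsymbol\Psi_{\rm idhw}=[\boldsymbol\Psi_0,\boldsymbol\Psi_1,\boldsymbol\Psi_2,\boldsymbol\Psi_3]$, where $\boldsymbol\Psi_0=N_{\rm p}^{-1/2}\boldsymbol 1_{N_{\rm p}}$ and, for $i\in\{1,2,3\}$, $\boldsymbol\Psi_i=[\boldsymbol\Psi_{i,1},\dots,\boldsymbol\Psi_{i,r}]$ with - $\boldsymbol\Psi_{1,\ell}=(\boldsymbol W^0_{\bar N_{\rm p}}\boldsymbol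 P_{\mathcal T_\ell}^\top)\otimes(\boldsymbol W_{\bar N_{\rm p}}\boldsymbol P_{\mathcal T_\ell}^\top)$, - $\boldsymbol\Psi_{2,\ell}=(\boldsymbol W_{\bar N_{\rm p}}\boldsymbol P_{\mathcal T_\ell}^\top)\otimes(\boldsymbol W^0_{\bar N_{\rm p}}\boldsymbol P_{\mathcal T_\ell}^\top)$, - $\boldsymbol\Psi_{3,\ell}=(\boldsymbol W_{\bar N_{\rm p}}\boldsymbol P_{\mathcal T_\ell}^\top)\otimes(\boldsymbol W_{\bar N_{\rm p}}\boldsymbol P_{\mathcal T_\ell}^\top)$. *)

(* Defs.v *)
From HB Require Import structures.
From mathcomp Require Import all_boot all_order all_algebra.
Set Implicit Arguments. Unset Strict Implicit. Unset Printing Implicit Defensive.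
Import Order.TTheory GRing.Theory Num.Theory.
Local Open Scope ring_scope.

Lemma kron_divP m p (i : 'I_(m * p)) : (i %/ p < m)%N.
Proof.
case: p i => [|p] [i /= Hi]; first by rewrite muln0 in Hi.
by rewrite ltn_divLR.
Qed.

Lemma kron_modP m p (i : 'I_(m * p)) : (i %% p < p)%N.
Proof.
case: p i => [|p] [i /= Hi]; first by rewrite muln0 in Hi.
by rewrite ltn_mod.
Qed.

Definition kron_hi m p (i : 'I_(m * p)) : 'I_m := Ordinal (kron_divP i).
Definition kron_lo m p (i : 'I_(m * p)) : 'I_p := Ordinal (kron_modP i).

Definition kron (R : pzRingType) m n p q (A : 'M[R]_(m, n)) (B : 'M[R]_(p, q))
  : 'M[R]_(m * p, n * q) :=
  \matrix_(i, j) (A (kron_hi i) (kron_hi j) * B (kron_lo i) (kron_lo j)).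

Definition vec_a (R : pzRingType) : 'cV[R]_2 := \col_i 1.
Definition vec_b (R : pzRingType) : 'cV[R]_2 :=
  \col_(i < 2) (if i == 0 :> nat then 1 else -1).

Lemma dim2S r : (2 ^ r * 2 = 2 ^ r.+1)%N.
Proof. by rewrite expnSr. Qed.
Lemma dim11S r : (2 ^ r * 1 + 2 ^ r * 1 = 2 ^ r.+1)%N.
Proof. by rewrite muln1 addnn -mul2n expnS. Qed.

Definition haar_step (R : rcfType) r (M X : 'M[R]_(2 ^ r)) (c : 'cV[R]_2)
  : 'M[R]_(2 ^ r.+1) :=
  castmx (dim2S r, dim11S r)
    ((Num.sqrt 2)^-1 *: row_mx (kron M (vec_a R)) (kron X c)).

(* Paley-ordered Hadamard matrix H_{2^r} *)
Fixpoint hadamard (R : rcfType) (r : nat) : 'M[R]_(2 ^ r) :=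
  match r with
  | 0 => 1%:M
  | r'.+1 => haar_step (hadamard R r') (hadamard R r') (vec_b R)
  end.

Fixpoint haarW (R : rcfType) (r : nat) : 'M[R]_(2 ^ r) :=
  match r with
  | 0 => 1%:M
  | r'.+1 => haar_step (haarW R r') 1%:M (vec_b R)
  end.

Fixpoint haarW0 (R : rcfType) (r : nat) : 'M[R]_(2 ^ r) :=
  match r with
  | 0 => 1%:M
  | r'.+1 => haar_step (haarW0 R r') 1%:M (vec_a R)
  end.

(* A P_{T_l}^T : list of the columns of A indexed (1-based) by
   T_0 = {1}, T_l = {2^(l-1)+1, ..., 2^l}; i.e. 0-based 2^(l-1) .. 2^l - 1. *)
Definition dyadic_level (l : nat) : seq nat :=
  if l is l'.+1 then iota (2 ^ l') (2 ^ l') else [:: 0%N].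

Definition cols_sel (R : pzRingType) n (A : 'M[R]_n) (S : seq nat) : seq 'cV[R]_n :=
  [seq col j A | j <- filter (fun j : 'I_n => (j : nat) \in S) (enum 'I_n)].

(* Kronecker product (X P^T) ⊗ (Y Q^T) of two column selections, as the list of
   its columns in order: column (i, j) is at position i * #cols(Y) + j. *)
Definition kron_cols (R : pzRingType) n (X Y : seq 'cV[R]_n) : seq 'cV[R]_(n * n) :=
  [seq kron u v | u <- X, v <- Y].

Definition Psi_il (R : rcfType) r (i l : nat) : seq 'cV[R]_(2 ^ r * 2 ^ r) :=
  let W := haarW R r in
  let W0 := haarW0 R r in
  let T := dyadic_level l in
  match i with
  | 1%N => kron_cols (cols_sel W0 T) (cols_sel W T)
  | 2%N => kron_cols (cols_sel W T) (cols_sel W0 T)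
  | _ => kron_cols (cols_sel W T) (cols_sel W T)
  end.

Definition Psi_i (R : rcfType) r (i : nat) : seq 'cV[R]_(2 ^ r * 2 ^ r) :=
  flatten [seq Psi_il R r i l | l <- iota 1 r].

Definition Psi_0 (R : rcfType) r : 'cV[R]_(2 ^ r * 2 ^ r) :=
  const_mx (Num.sqrt ((2 ^ r * 2 ^ r)%N%:R))^-1.

Definition Psi_idhw_cols (R : rcfType) r : seq 'cV[R]_(2 ^ r * 2 ^ r) :=
  Psi_0 R r :: Psi_i R r 1 ++ Psi_i R r 2 ++ Psi_i R r 3.

Definition Psi_idhw (R : rcfType) r : 'M[R]_(2 ^ r * 2 ^ r) :=
  \matrix_(i, j) (nth 0 (Psi_idhw_cols R r) j) i 0.

(* B = (H ⊗ H)^* Psi_idhw  (real entries: ^* is the transpose) *)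
Definition Bmat (R : rcfType) r : 'M[R]_(2 ^ r * 2 ^ r) :=
  (kron (hadamard R r) (hadamard R r))^T *m Psi_idhw R r.

Definition local_coherence (R : rcfType) r (l : 'I_(2 ^ r * 2 ^ r)) : R :=
  \big[Num.max/0]_(j < 2 ^ r * 2 ^ r) `|Bmat R r l j|.

(* kappa for m = max{l_x, l_y} (1-based):
   min{1, 2^{-floor(log2(m-1))}}, with log2 0 = -oo giving 1 when m = 1.
   For m >= 2, floor(log2(m-1)) = trunc_log 2 (m-1). *)
Definition kappa_p (R : rcfType) (m : nat) : R :=
  if (m <= 1)%N then 1
  else Num.min 1 ((2 : R) ^- trunc_log 2 (m - 1)).

(* Main.v *)
Require Import Defs.
From HB Require Import structures.
From mathcomp Require Import all_boot all_order all_algebra.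
From mathcomp Require Import zify ring lra.
Import Order.TTheory GRing.Theory Num.Theory.
Local Open Scope ring_scope.

Section S.
Variable R : rcfType.
Local Notation si := ((Num.sqrt (2:R))^-1).
Local Notation sgn t := (if (t %% 2 == 0)%N then (1:R) else -1).

Fixpoint hN (r x k : nat) : R :=
  match r with
  | 0 => 1
  | r'.+1 => if (k < 2 ^ r')%N then si * hN r' (x %/ 2) k
             else si * (hN r' (x %/ 2) (k - 2 ^ r') * sgn x)
  end.
Fixpoint wN (r x k : nat) : R :=
  match r with
  | 0 => 1
  | r'.+1 => if (k < 2 ^ r')%N then si * wN r' (x %/ 2) k
             else si * (((x %/ 2 == k - 2 ^ r')%N)%:R * sgn x)
  end.
Fixpoint w0N (r x k : nat) : R :=
  match r with
  | 0 => 1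
  | r'.+1 => if (k < 2 ^ r')%N then si * w0N r' (x %/ 2) k
             else si * ((x %/ 2 == k - 2 ^ r')%N)%:R
  end.

Lemma ord1_0 (x : 'I_(2^0)) : (x : nat) = 0%N.
Proof. by case: x => [[|?]] //. Qed.

Lemma hadamardE r (x k : 'I_(2 ^ r)) : hadamard R r x k = hN r x k.
Proof.
elim: r x k => [|r IH] x k.
  have -> : x = k by apply/val_inj; rewrite /= !ord1_0.
  by rewrite /= mxE eqxx.
rewrite /= /haar_step castmxE !mxE; case: splitP => j Hj; rewrite !mxE IH /=;
  move: Hj => /= ->; rewrite ?divn1 ?mulr1 ?muln1.
  rewrite (_ : (j < 2 ^ r)%N = true) //; by have := ltn_ord j; lia.
rewrite (_ : (2 ^ r * 1 + j < 2 ^ r)%N = false); last lia.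
rewrite (_ : (2 ^ r * 1 + j - 2 ^ r)%N = j) //; lia.
Qed.

Lemma haarWE r (x k : 'I_(2 ^ r)) : haarW R r x k = wN r x k.
Proof.
elim: r x k => [|r IH] x k.
  have -> : x = k by apply/val_inj; rewrite /= !ord1_0.
  by rewrite /= mxE eqxx.
rewrite /= /haar_step castmxE !mxE; case: splitP => j Hj; rewrite !mxE ?IH /=;
  move: Hj => /= ->; rewrite ?divn1 ?mulr1 ?muln1.
  rewrite (_ : (j < 2 ^ r)%N = true) //; by have := ltn_ord j; lia.
rewrite (_ : (2 ^ r * 1 + j < 2 ^ r)%N = false); last lia.
rewrite (_ : (2 ^ r * 1 + j - 2 ^ r)%N = j); last lia.
by rewrite -val_eqE /= divn1.
Qed.

Lemma haarW0E r (x k : 'I_(2 ^ r)) : haarW0 R r x k = w0N r x k.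
Proof.
elim: r x k => [|r IH] x k.
  have -> : x = k by apply/val_inj; rewrite /= !ord1_0.
  by rewrite /= mxE eqxx.
rewrite /= /haar_step castmxE !mxE; case: splitP => j Hj; rewrite !mxE ?IH /=;
  move: Hj => /= ->; rewrite ?divn1 ?mulr1 ?muln1.
  rewrite (_ : (j < 2 ^ r)%N = true) //; by have := ltn_ord j; lia.
rewrite (_ : (2 ^ r * 1 + j < 2 ^ r)%N = false); last lia.
rewrite (_ : (2 ^ r * 1 + j - 2 ^ r)%N = j); last lia.
by rewrite -val_eqE /= divn1.
Qed.

Local Notation h2 := ((2:R)^-1).

Lemma si2 : si * si = h2.
Proof.
rewrite -invfM -expr2 sqr_sqrtr //.
Qed.

Lemma si2K (X Y : R) : X = si * si * Y * 2 -> X = Y.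
Proof. by rewrite si2 => ->; rewrite mulrAC mulVf ?mul1r // pnatr_eq0. Qed.

Lemma sum_split n (F : nat -> R) :
  \sum_(0 <= x < 2 * n) F x = \sum_(0 <= x < n) (F (2 * x)%N + F (2 * x + 1)%N).
Proof.
elim: n => [|n IH]; first by rewrite !big_geq.
have -> : (2 * n.+1 = (2 * n).+1.+1)%N by lia.
rewrite !big_nat_recr //= IH addrA; do 2 f_equal; lia.
Qed.

Lemma sum_delta n j (f : nat -> R) : (j < n)%N ->
  \sum_(0 <= x < n) (x == j)%:R * f x = f j.
Proof.
move=> Hj; rewrite big_mkord (bigD1 (Ordinal Hj)) //= eqxx mul1r big1 ?addr0 //.
move=> i Hi; rewrite (_ : (i == j :> nat) = false) ?mul0r //; exact: negbTE Hi.
Qed.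

Lemma d2a x : ((2 * x) %/ 2 = x)%N. Proof. lia. Qed.
Lemma d2b x : ((2 * x + 1) %/ 2 = x)%N. Proof. lia. Qed.
Lemma m2a x : ((2 * x) %% 2 = 0)%N. Proof. lia. Qed.
Lemma m2b x : ((2 * x + 1) %% 2 = 1)%N. Proof. lia. Qed.

Lemma hN_sq r x k : hN r x k ^+ 2 = h2 ^+ r.
Proof.
elim: r x k => [|r IH] x k /=; first by rewrite expr1n.
have e : si ^+ 2 = h2 by rewrite expr2 si2.
case: ifP => _; first by rewrite exprMn IH e exprS.
by case: ifP => _; rewrite ?mulr1 ?mulrN1 exprMn ?sqrrN IH e exprS.
Qed.

Definition CwN r k j := \sum_(0 <= x < 2 ^ r) hN r x k * wN r x j.
Definition Cw0N r k j := \sum_(0 <= x < 2 ^ r) hN r x k * w0N r x j.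

Lemma CwN_S r k j : (j < 2 ^ r.+1)%N ->
  CwN r.+1 k j = if (k < 2 ^ r)%N then (if (j < 2 ^ r)%N then CwN r k j else 0)
                 else (if (j < 2 ^ r)%N then 0 else hN r (j - 2 ^ r) (k - 2 ^ r)).
Proof.
move=> Hj; rewrite /CwN expnS sum_split.
case: ifP => Hk; case: ifP => Hj'.
- apply: eq_bigr => x _ /=; rewrite Hk Hj' !d2a !d2b; apply: si2K; ring.
- apply: big1 => x _ /=; rewrite Hk Hj' !d2a !d2b !m2a !m2b /=; ring.
- apply: big1 => x _ /=; rewrite Hk Hj' !d2a !d2b !m2a !m2b /=; ring.
- rewrite -(@sum_delta (2 ^ r) (j - 2 ^ r) (fun x => hN r x (k - 2 ^ r))); last by rewrite expnS in Hj; lia.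
  apply: eq_bigr => x _ /=; rewrite Hk Hj' !d2a !d2b !m2a !m2b /=; apply: si2K; ring.
Qed.

Lemma Cw0N_S r k j : (j < 2 ^ r.+1)%N ->
  Cw0N r.+1 k j = if (k < 2 ^ r)%N then (if (j < 2 ^ r)%N then Cw0N r k j
                   else hN r (j - 2 ^ r) k) else 0.
Proof.
move=> Hj; rewrite /Cw0N expnS sum_split.
case: ifP => Hk; first case: ifP => Hj'.
- apply: eq_bigr => x _ /=; rewrite Hk Hj' !d2a !d2b; apply: si2K; ring.
- rewrite -(@sum_delta (2 ^ r) (j - 2 ^ r) (fun x => hN r x k)); last by rewrite expnS in Hj; lia.
  apply: eq_bigr => x _ /=; rewrite Hk Hj' !d2a !d2b /=; apply: si2K; ring.
- apply: big1 => x _ /=; rewrite Hk !d2a !d2b !m2a !m2b /=; ring.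
Qed.

Definition lev k := if k == 0%N then 0%N else (trunc_log 2 k).+1.
Definition qv k : R := h2 ^+ trunc_log 2 k.

Lemma tl_lev k : trunc_log 2 k = (lev k).-1.
Proof. by rewrite /lev; case: eqP => [->|]; rewrite ?trunc_log0. Qed.

Lemma qv_lev a b : lev a = lev b -> qv a = qv b.
Proof. by rewrite /qv !tl_lev => ->. Qed.

Lemma lev_lt r k : (k < 2 ^ r)%N -> (lev k <= r)%N.
Proof.
rewrite /lev; case: eqP => // /eqP k0 Hk.
have k0' : (0 < k)%N by rewrite lt0n.
have H := trunc_logP (isT : (1 < 2)%N) k0'.
have : (2 ^ trunc_log 2 k < 2 ^ r)%N by apply: leq_ltn_trans H Hk.
by rewrite ltn_exp2l.
Qed.

Lemma lev_eq r k : (2 ^ r <= k < 2 ^ r.+1)%N -> lev k = r.+1 /\ trunc_log 2 k = r.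
Proof.
move=> H; have tl := trunc_log_eq (isT : (1 < 2)%N) H.
rewrite /lev tl; case: eqP => [k0|//]; by move: H; rewrite k0 leqNgt expn_gt0.
Qed.

Arguments lev_eq {r k}.
Arguments lev_lt {r k}.

Lemma CwN_sq r k j : (k < 2 ^ r)%N -> (j < 2 ^ r)%N ->
  CwN r k j ^+ 2 = if lev k == lev j then qv j else 0.
Proof.
elim: r k j => [|r IH] k j Hk Hj.
  move: Hk Hj; rewrite expn0 !ltnS !leqn0 => /eqP -> /eqP ->.
  by rewrite /CwN expn0 big_nat1 /= mulr1 expr1n /qv trunc_log0.
rewrite CwN_S //.
have [Hk1|Hk1] := ltnP k (2 ^ r); have [Hj1|Hj1] := ltnP j (2 ^ r).
- exact: IH.
- have [-> _] := lev_eq (introT andP (conj Hj1 Hj)).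
  by rewrite expr0n /= (_ : (lev k == r.+1) = false) //; have := lev_lt Hk1; lia.
- have [-> _] := lev_eq (introT andP (conj Hk1 Hk)).
  by rewrite expr0n /= (_ : (r.+1 == lev j) = false) //; have := lev_lt Hj1; lia.
- have [-> _] := lev_eq (introT andP (conj Hk1 Hk)).
  have [-> tj] := lev_eq (introT andP (conj Hj1 Hj)).
  by rewrite eqxx hN_sq /qv tj.
Qed.

Lemma Cw0N_sq r k j : (k < 2 ^ r)%N -> (0 < j < 2 ^ r)%N ->
  Cw0N r k j ^+ 2 = if (lev k < lev j)%N then qv j else 0.
Proof.
elim: r k j => [|r IH] k j Hk /andP [j0 Hj].
  by move: Hj j0; rewrite expn0 ltnS leqn0 => /eqP ->.
rewrite Cw0N_S //.
have [Hk1|Hk1] := ltnP k (2 ^ r); have [Hj1|Hj1] := ltnP j (2 ^ r).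
- by apply: IH => //; rewrite j0.
- have [-> tj] := lev_eq (introT andP (conj Hj1 Hj)).
  by rewrite hN_sq /qv tj (_ : (lev k < r.+1)%N) //; have := lev_lt Hk1; lia.
- have [-> _] := lev_eq (introT andP (conj Hk1 Hk)).
  by rewrite expr0n /= (_ : (r.+1 < lev j)%N = false) //; have := lev_lt Hj1; lia.
- have [-> _] := lev_eq (introT andP (conj Hk1 Hk)).
  have [-> tj] := lev_eq (introT andP (conj Hj1 Hj)).
  by rewrite ltnn expr0n.
Qed.

Lemma sum_pair n p (G : nat -> R) :
  \sum_(0 <= m < n * p) G m = \sum_(0 <= a < n) \sum_(0 <= b < p) G (a * p + b)%N.
Proof.
elim: n => [|n IH]; first by rewrite mul0n !big_geq.
rewrite mulSnr (big_cat_nat _ (n := n * p)) ?leq_addr //= IH big_nat_recr //=.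
congr (_ + _).
rewrite -{1}(add0n (n * p)%N) big_addn addKn.
by apply: eq_bigr => i _; rewrite addnC.
Qed.

Definition Dc r (l : 'I_(2 ^ r * 2 ^ r)) (c : 'cV[R]_(2 ^ r * 2 ^ r)) :=
  \sum_(m < 2 ^ r * 2 ^ r) kron (hadamard R r) (hadamard R r) m l * c m 0.

Lemma Dc_gen r (l : 'I_(2 ^ r * 2 ^ r)) ly lx (f g : nat -> R) (c : 'cV[R]_(2 ^ r * 2 ^ r)) :
  (ly < 2 ^ r)%N -> (lx < 2 ^ r)%N -> (l : nat) = (2 ^ r * ly + lx)%N ->
  (forall m : 'I_(2 ^ r * 2 ^ r), c m 0 = f (m %/ 2 ^ r)%N * g (m %% 2 ^ r)%N) ->
  Dc r l c = (\sum_(0 <= x < 2 ^ r) hN r x ly * f x) *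
           (\sum_(0 <= y < 2 ^ r) hN r y lx * g y).
Proof.
move=> Hly Hlx Hl Hc.
have n0 : (0 < 2 ^ r)%N by rewrite expn_gt0.
have e1 : (l %/ 2 ^ r = ly)%N by rewrite Hl mulnC divnMDl // divn_small // addn0.
have e2 : (l %% 2 ^ r = lx)%N by rewrite Hl mulnC modnMDl modn_small.
rewrite /Dc (eq_bigr (fun m : 'I_(2 ^ r * 2 ^ r) =>
   hN r (m %/ 2 ^ r) ly * hN r (m %% 2 ^ r) lx * (f (m %/ 2 ^ r)%N * g (m %% 2 ^ r)%N))); last first.
  by move=> m _; rewrite Hc !mxE !hadamardE /= e1 e2.
rewrite -(big_mkord xpredT (fun m => hN r (m %/ 2 ^ r) ly * hN r (m %% 2 ^ r) lx *
   (f (m %/ 2 ^ r)%N * g (m %% 2 ^ r)%N))) sum_pair mulr_suml.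
apply: eq_big_nat => a /andP [_ Ha]; rewrite mulr_sumr.
apply: eq_big_nat => b /andP [_ Hb].
rewrite divnMDl // divn_small // addn0 modnMDl modn_small //.
ring.
Qed.

Definition Xs r (i : nat) := if i == 1%N then haarW0 R r else haarW R r.
Definition Ys r (i : nat) := if i == 2%N then haarW0 R r else haarW R r.

Lemma Psi_ilE r i l : Psi_il R r i l =
  kron_cols (cols_sel (Xs r i) (dyadic_level l)) (cols_sel (Ys r i) (dyadic_level l)).
Proof. by rewrite /Psi_il /Xs /Ys; case: i => [|[|[|i]]]. Qed.

Lemma mem_cols_sel r (A : 'M[R]_(2 ^ r)) T c :
  c \in cols_sel A T -> exists2 u : 'I_(2 ^ r), (u : nat) \in T & c = col u A.
Proof.
case/mapP => u; rewrite mem_filter => /andP [Hu _] ->; by exists u.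
Qed.

Lemma cols_sel_mem r (A : 'M[R]_(2 ^ r)) T (u : 'I_(2 ^ r)) :
  (u : nat) \in T -> col u A \in cols_sel A T.
Proof. by move=> Hu; apply: map_f; rewrite mem_filter Hu mem_enum. Qed.

Lemma mem_Psi_i r i c : c \in Psi_i R r i -> exists l (u v : 'I_(2 ^ r)),
  [/\ (0 < l <= r)%N, (u : nat) \in dyadic_level l, (v : nat) \in dyadic_level l
    & c = kron (col u (Xs r i)) (col v (Ys r i))].
Proof.
case/flatten_mapP => l; rewrite mem_iota => Hl; rewrite Psi_ilE.
case/allpairsP => [[u' v'] [/= /mem_cols_sel [u Hu ->] /mem_cols_sel [v Hv ->] ->]].
exists l, u, v; split => //; lia.
Qed.

Lemma Psi_i_mem r i l (u v : 'I_(2 ^ r)) : (0 < l <= r)%N ->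
  (u : nat) \in dyadic_level l -> (v : nat) \in dyadic_level l ->
  kron (col u (Xs r i)) (col v (Ys r i)) \in Psi_i R r i.
Proof.
move=> Hl Hu Hv; apply/flatten_mapP; exists l; first by rewrite mem_iota; lia.
by rewrite Psi_ilE; apply: allpairs_f; apply: cols_sel_mem.
Qed.

Lemma count_iota_sub a b n : (a + b <= n)%N ->
  count (fun x => x \in iota a b) (iota 0 n) = b.
Proof.
move=> H; have -> : n = (a + (b + (n - a - b)))%N by lia.
rewrite !iotaD !count_cat add0n.
rewrite [count _ (iota 0 a)](@eq_in_count _ _ pred0); last by move=> x; rewrite !mem_iota /=; lia.
rewrite [count _ (iota a b)](@eq_in_count _ _ predT); last by move=> x; rewrite !mem_iota /=; lia.
rewrite [count _ (iota (a + b) _)](@eq_in_count _ _ pred0); last by move=> x; rewrite !mem_iota /=; lia.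
by rewrite !count_pred0 count_predT size_iota addn0.
Qed.

Lemma size_cols_sel r (A : 'M[R]_(2 ^ r)) l : (0 < l <= r)%N ->
  size (cols_sel A (dyadic_level l)) = (2 ^ l.-1)%N.
Proof.
case: l => // l /= Hl.
rewrite size_map size_filter -(count_map val (fun x => x \in iota (2 ^ l) (2 ^ l))).
rewrite val_enum_ord count_iota_sub //.
rewrite addnn -mul2n -expnS leq_exp2l //.
Qed.

Lemma size_Psi_i r i : size (Psi_i R r i) =
  sumn [seq (2 ^ l.-1 * 2 ^ l.-1)%N | l <- iota 1 r].
Proof.
rewrite size_flatten /shape -map_comp; congr sumn; apply/eq_in_map => l.
rewrite mem_iota => Hl /=; rewrite Psi_ilE /kron_cols size_allpairs !size_cols_sel //; lia.
Qed.

Lemma sumn_4 r : (1 + 3 * sumn [seq (2 ^ l.-1 * 2 ^ l.-1)%N | l <- iota 1 r] = 2 ^ r * 2 ^ r)%N.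
Proof.
elim: r => [|r IH] //.
have -> : iota 1 r.+1 = iota 1 r ++ [:: r.+1] by rewrite -(addn1 r) iotaD add1n addn1.
rewrite map_cat sumn_cat /= !expnS; lia.
Qed.

Lemma size_cols r : size (Psi_idhw_cols R r) = (2 ^ r * 2 ^ r)%N.
Proof.
rewrite /Psi_idhw_cols /= !size_cat !size_Psi_i -sumn_4; lia.
Qed.

Lemma wN0 r x : wN r x 0 = si ^+ r.
Proof. by elim: r x => [|r IH] x //=; rewrite expn_gt0 IH exprS. Qed.

Lemma Psi0E r (m : 'I_(2 ^ r * 2 ^ r)) :
  Psi_0 R r m 0 = wN r (m %/ 2 ^ r)%N 0 * wN r (m %% 2 ^ r)%N 0.
Proof.
rewrite mxE !wN0 -exprMn si2 natrM -expr2 sqrtr_sqr ger0_norm ?ler0n //.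
by rewrite natrX exprVn.
Qed.

Lemma Dc_Psi0 r (l : 'I_(2 ^ r * 2 ^ r)) ly lx :
  (ly < 2 ^ r)%N -> (lx < 2 ^ r)%N -> (l : nat) = (2 ^ r * ly + lx)%N ->
  Dc r l (Psi_0 R r) = CwN r ly 0 * CwN r lx 0.
Proof. by move=> *; apply: Dc_gen => // m; rewrite Psi0E. Qed.

Lemma Dc_kron r (l : 'I_(2 ^ r * 2 ^ r)) ly lx i (u v : 'I_(2 ^ r)) :
  (ly < 2 ^ r)%N -> (lx < 2 ^ r)%N -> (l : nat) = (2 ^ r * ly + lx)%N ->
  Dc r l (kron (col u (Xs r i)) (col v (Ys r i))) =
  (if i == 1%N then Cw0N r ly u else CwN r ly u) *
  (if i == 2%N then Cw0N r lx v else CwN r lx v).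
Proof.
move=> H1 H2 H3.
rewrite (@Dc_gen r l ly lx (fun x => if i == 1%N then w0N r x u else wN r x u)
                           (fun x => if i == 2%N then w0N r x v else wN r x v)) //.
  by rewrite /CwN /Cw0N; case: (i == 1%N); case: (i == 2%N).
move=> m; rewrite !mxE /Xs /Ys.
by case: (i == 1%N); case: (i == 2%N); rewrite ?haarWE ?haarW0E.
Qed.

Lemma qv_ge0 k : 0 <= qv k.
Proof. by rewrite /qv exprn_ge0 // invr_ge0 ler0n. Qed.

Lemma lev_mono a b : (a <= b)%N -> (lev a <= lev b)%N.
Proof.
rewrite /lev; case: eqP => [//|/eqP a0]; case: eqP => [b0|_ H].
  by move=> H; move: a0; rewrite b0 leqn0 in H; rewrite H.
by rewrite ltnS leq_trunc_log.
Qed.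

Lemma lev0 k : (lev k == 0%N) = (k == 0%N).
Proof. by rewrite /lev; case: ifP. Qed.

Lemma dyadic_lev l u : (0 < l)%N -> u \in dyadic_level l -> lev u = l /\ (0 < u)%N.
Proof.
case: l => // l _; rewrite /= mem_iota => H.
have H' : (2 ^ l <= u < 2 ^ l.+1)%N by rewrite expnS; lia.
have [-> _] := lev_eq H'.
have p : (0 < 2 ^ l)%N by rewrite expn_gt0.
split => //; lia.
Qed.

Lemma kappaE lx ly : kappa_p R (maxn lx.+1 ly.+1) = qv (maxn lx ly).
Proof.
rewrite /kappa_p maxnSS ltnS leqn0 subn1 /=; case: eqP => [->|_].
  by rewrite /qv trunc_log0.
by rewrite /qv exprVn min_r // -exprVn exprn_ile1 // ?invr_ge0 ?ler0n // invf_le1 ?ler1n.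
Qed.

Lemma Kq lx ly u : lev u = maxn (lev lx) (lev ly) -> qv u = qv (maxn lx ly).
Proof.
move=> H; apply: qv_lev; rewrite H.
case: (leqP lx ly) => Hxy.
  by apply/maxn_idPr; apply: lev_mono.
by apply/maxn_idPl; apply: lev_mono; apply: ltnW.
Qed.

Lemma abs_le (x K : R) : 0 <= K -> x ^+ 2 <= K ^+ 2 -> `|x| <= K.
Proof.
move=> K0 H; rewrite -(@ler_pXn2r R 2) ?inE ?normr_ge0 //.
rewrite real_normK ?num_real //. all: try (rewrite qualifE /= normr_ge0 //).
Qed.

Lemma abs_eq (x K : R) : 0 <= K -> x ^+ 2 = K ^+ 2 -> `|x| = K.
Proof.
move=> K0 H; apply/eqP; rewrite -(@eqrXn2 R 2) ?normr_ge0 //.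
by rewrite real_normK ?num_real // H.
Qed.

Lemma cols_bound r (l : 'I_(2 ^ r * 2 ^ r)) (lx ly : 'I_(2 ^ r)) :
  (l : nat) = (2 ^ r * ly + lx)%N -> forall c, c \in Psi_idhw_cols R r ->
  `|Dc r l c| <= qv (maxn lx ly).
Proof.
move=> Hl c; have n0 : (0 < 2 ^ r)%N by rewrite expn_gt0.
move=> Hc; apply: abs_le; first exact: qv_ge0.
move: Hc; rewrite /Psi_idhw_cols inE !mem_cat => /orP [/eqP->|Hc].
  rewrite (@Dc_Psi0 r l ly lx (ltn_ord ly) (ltn_ord lx) Hl) exprMn !CwN_sq //.
  rewrite /(lev 0) /=; case: ifP => h1; last by rewrite mul0r exprn_ge0 ?qv_ge0.
  case: ifP => h2; last by rewrite mulr0 exprn_ge0 ?qv_ge0.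
  move: h1 h2; rewrite !lev0 => /eqP -> /eqP ->; by rewrite -expr2.
have [i [Hi Hc']] : exists i, i \in [:: 1; 2; 3]%N /\ c \in Psi_i R r i.
  case/orP: Hc => [H|/orP [H|H]]; [exists 1%N|exists 2%N|exists 3%N]; by [].
case/mem_Psi_i: Hc' => L [u [v [HL Hu Hv ->]]].
have [lu u0] := @dyadic_lev L u (proj1 (andP HL)) Hu.
have [lv v0] := @dyadic_lev L v (proj1 (andP HL)) Hv.
rewrite (@Dc_kron r l ly lx _ _ _ (ltn_ord ly) (ltn_ord lx) Hl) exprMn.
have Bu : (0 < u < 2 ^ r)%N by rewrite u0 ltn_ord.
have Bv : (0 < v < 2 ^ r)%N by rewrite v0 ltn_ord.
have K2 : 0 <= qv (maxn lx ly) ^+ 2 by rewrite exprn_ge0 ?qv_ge0.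
move: Hi; rewrite !inE => /or3P [] /eqP ->.
- rewrite /= Cw0N_sq // CwN_sq ?ltn_ord // lu lv.
  case: ifP => h1; last by rewrite mul0r.
  case: ifP => h2; last by rewrite mulr0.
  move/eqP: h2 => h2.
  rewrite (@Kq lx ly u) ?(@Kq lx ly v) ?expr2 // ?lu ?lv; lia.
- rewrite /= Cw0N_sq // CwN_sq ?ltn_ord // lu lv.
  case: ifP => h1; last by rewrite mul0r.
  case: ifP => h2; last by rewrite mulr0.
  move/eqP: h1 => h1.
  rewrite (@Kq lx ly u) ?(@Kq lx ly v) ?expr2 // ?lu ?lv; lia.
- rewrite /= !CwN_sq ?ltn_ord // lu lv.
  case: ifP => h1; last by rewrite mul0r.
  case: ifP => h2; last by rewrite mulr0.
  move/eqP: h1 => h1; move/eqP: h2 => h2.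
  rewrite (@Kq lx ly u) ?(@Kq lx ly v) ?expr2 // ?lu ?lv; lia.
Qed.

Lemma cols_witness r (l : 'I_(2 ^ r * 2 ^ r)) (lx ly : 'I_(2 ^ r)) :
  (l : nat) = (2 ^ r * ly + lx)%N ->
  exists2 c, c \in Psi_idhw_cols R r & `|Dc r l c| = qv (maxn lx ly).
Proof.
move=> Hl; have n0 : (0 < 2 ^ r)%N by rewrite expn_gt0.
have K0 := qv_ge0 (maxn lx ly).
case M0: (maxn (lev lx) (lev ly) == 0)%N.
  have ex : (lx : nat) = 0%N by apply/eqP; rewrite -lev0; apply/eqP; move/eqP: M0; lia.
  have ey : (ly : nat) = 0%N by apply/eqP; rewrite -lev0; apply/eqP; move/eqP: M0; lia.
  exists (Psi_0 R r); first by rewrite inE eqxx.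
  apply: abs_eq => //.
  rewrite (@Dc_Psi0 r l ly lx (ltn_ord ly) (ltn_ord lx) Hl) exprMn !CwN_sq // ex ey.
  by rewrite /= expr2.
have [M' EM] : exists M', maxn (lev lx) (lev ly) = M'.+1.
  by move: M0; case: (maxn _ _) => // M' _; exists M'.
have Mr : (M' < r)%N.
  have := lev_lt (ltn_ord lx); have := lev_lt (ltn_ord ly).
  by move: EM; rewrite /maxn; case: ifP => _ -> //; lia.
have Hw : (2 ^ M' < 2 ^ r)%N by rewrite ltn_exp2l.
pose wo : 'I_(2 ^ r) := Ordinal Hw.
have Hwo : (wo : nat) \in dyadic_level M'.+1.
  have p : (0 < 2 ^ M')%N by rewrite expn_gt0.
  rewrite /= mem_iota leqnn /=; lia.
have [lw w0] := @dyadic_lev M'.+1 wo isT Hwo.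
have Kw : qv wo = qv (maxn lx ly) by apply: Kq; rewrite lw EM.
have Bw : (0 < wo < 2 ^ r)%N by rewrite w0 ltn_ord.
have HM : (0 < M'.+1 <= r)%N by [].
case: (ltngtP (lev lx) (lev ly)) => Hab.
- exists (kron (col wo (Xs r 2)) (col wo (Ys r 2))).
    by rewrite inE !mem_cat (@Psi_i_mem r _ M'.+1) ?orbT.
  apply: abs_eq => //.
  rewrite (@Dc_kron r l ly lx _ _ _ (ltn_ord ly) (ltn_ord lx) Hl) /= exprMn.
  rewrite Cw0N_sq // CwN_sq ?ltn_ord // lw.
  have e1 : lev ly = M'.+1 by move: EM; rewrite /maxn Hab.
  by rewrite e1 eqxx (_ : (lev lx < M'.+1)%N) -?e1 // Kw expr2.
- exists (kron (col wo (Xs r 1)) (col wo (Ys r 1))).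
    by rewrite inE !mem_cat (@Psi_i_mem r _ M'.+1) ?orbT.
  apply: abs_eq => //.
  rewrite (@Dc_kron r l ly lx _ _ _ (ltn_ord ly) (ltn_ord lx) Hl) /= exprMn.
  rewrite Cw0N_sq // CwN_sq ?ltn_ord // lw.
  have e1 : lev lx = M'.+1 by move: EM; rewrite /maxn ltnNge (ltnW Hab).
  by rewrite e1 eqxx (_ : (lev ly < M'.+1)%N) -?e1 // Kw expr2.
- exists (kron (col wo (Xs r 3)) (col wo (Ys r 3))).
    by rewrite inE !mem_cat (@Psi_i_mem r _ M'.+1) ?orbT.
  apply: abs_eq => //.
  rewrite (@Dc_kron r l ly lx _ _ _ (ltn_ord ly) (ltn_ord lx) Hl) /= exprMn.
  rewrite !CwN_sq ?ltn_ord // lw.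
  have e1 : lev lx = M'.+1 by move: EM; rewrite Hab maxnn.
  by rewrite e1 -Hab e1 eqxx Kw expr2.
Qed.

Lemma lcE r (l : 'I_(2 ^ r * 2 ^ r)) (lx ly : 'I_(2 ^ r)) :
  (l : nat) = (2 ^ r * ly + lx)%N -> @local_coherence R r l = qv (maxn lx ly).
Proof.
move=> Hl.
have BE : forall j, Bmat R r l j = Dc r l (nth 0 (Psi_idhw_cols R r) j).
  move=> j; rewrite /Bmat /Dc !mxE; apply: eq_bigr => m _; rewrite !mxE.
  done.
rewrite /local_coherence; apply/eqP; rewrite eq_le; apply/andP; split.
  apply: (big_ind (fun x => x <= qv (maxn lx ly))); first exact: qv_ge0.
    by move=> x y hx hy; rewrite ge_max hx hy.
  move=> j _; rewrite BE; apply: cols_bound => //; apply: mem_nth.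
  by rewrite size_cols.
have [c Hc Ec] := @cols_witness r l lx ly Hl.
have Hj : (index c (Psi_idhw_cols R r) < 2 ^ r * 2 ^ r)%N by rewrite -{2}(size_cols r) index_mem.
rewrite (bigD1 (Ordinal Hj)) //= BE nth_index // Ec le_max lexx.
done.
Qed.

Lemma qv_top r k : (2 ^ r <= k < 2 ^ r.+1)%N -> qv k = h2 ^+ r.
Proof. by move=> H; have [_ t] := lev_eq H; rewrite /qv t. Qed.

Definition Ssum r := \sum_(0 <= ly < 2 ^ r) \sum_(0 <= lx < 2 ^ r) qv (maxn lx ly) ^+ 2.

Lemma Ssum_eq r : Ssum r = 1 + 3 * r%:R.
Proof.
elim: r => [|r IH].
  by rewrite /Ssum expn0 !big_nat1 /= /qv trunc_log0 expr1n mulr0 addr0.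
set n := (2 ^ r)%N.
have e2 : (2 ^ r.+1 = n + n)%N by rewrite expnS /n; lia.
have n0 : (0 < n)%N by rewrite expn_gt0.
set c := (h2 ^+ r) ^+ 2.
have ec : c *+ (n * n) = 1.
  rewrite -mulr_natr natrM -expr2 /n natrX /c -exprMn -exprMn mulVf ?pnatr_eq0 //.
  by rewrite !expr1n.
rewrite /Ssum e2 (big_cat_nat _ (n := n)) ?leq_addr //=.
rewrite (eq_big_nat _ _ (F2 := fun ly => \sum_(0 <= lx < n) qv (maxn lx ly) ^+ 2 + c *+ n)); last first.
  move=> ly /andP [_ Hly]; rewrite (big_cat_nat _ (n := n)) ?leq_addr //=.
  congr (_ + _); transitivity (\sum_(n <= i < n + n) c); last by rewrite sumr_const_nat addnK.
  apply: eq_big_nat => lx /andP [H1 H2]; rewrite /c (@qv_top r) // e2.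
  by move: Hly H1 H2; rewrite /n; lia.
rewrite (@eq_big_nat _ 0 _ n (n + n) _ (fun _ => c *+ (n + n))); last first.
  move=> ly /andP [H1 H2]; transitivity (\sum_(0 <= i < n + n) c); last by rewrite sumr_const_nat subn0.
  apply: eq_big_nat => lx /andP [_ H3]; rewrite /c (@qv_top r) // e2.
  by move: H1 H2 H3; rewrite /n; lia.
rewrite big_split /= -/(Ssum r) IH.
rewrite !sumr_const_nat subn0 addnK -!mulrnA mulnDl mulrnDr ec.
rewrite -(natr1 (R:=R) r); ring.
Qed.
End S.

Theorem mainTheorem2 (R : rcfType) (r : nat) (hr : (1 <= r)%N) :
  (forall (lx ly : 'I_(2 ^ r)) (l : 'I_(2 ^ r * 2 ^ r)),
      (l : nat) = (2 ^ r * ly + lx)%N ->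
      @local_coherence R r l = @kappa_p R (maxn lx.+1 ly.+1))
  /\
  \sum_(ly < 2 ^ r) \sum_(lx < 2 ^ r) (@kappa_p R (maxn lx.+1 ly.+1)) ^+ 2
    = 1 + 3 * r%:R.
Proof.
split.
  by move=> lx ly l Hl; rewrite (@lcE R r l lx ly Hl) kappaE.
transitivity (Ssum R r); last exact: Ssum_eq.
rewrite /Ssum big_mkord; apply: eq_bigr => ly _; rewrite big_mkord.
by apply: eq_bigr => lx _; rewrite kappaE.
Qed.
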